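(* Let $q\geqslant 3$ be a power of the prime $p$, let $r\in\mathbb{Z}_{\geqslant 1}$ and $\alpha\in\mathbb{F}_{q^r}$. If $\mathrm{Tr}_{\mathbb{F}_{q^r}/\mathbb{F}_q}(\alpha)\neq 0$, then, with $\beta=(\mathrm{Tr}_{\mathbb{F}_{q^r}/\mathbb{F}_q}(\alpha))^{p-1}$, there exist distinct $\gamma_1,\ldots,\gamma_{q/p}\in\mathbb{F}_{q^r}^{\times}$ such that $$T^q-T-\alpha=(T^p-\beta T-\gamma_1)(T^p-\beta T-\gamma_2)\cdots(T^p-\beta T-\gamma_{q/p})$$ in $\mathbb{F}_{q^r}[T]$. If $\mathrm{Tr}_{\mathbb{F}_{q^r}/\mathbb{F}_q}(\alpha)=0$, then $T^q-T-\alpha$ splits completely into linear factors in $\mathbb{F}_{q^r}[T]$.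
   Context: $\mathrm{Tr}_{\mathbb{F}_{q^r}/\mathbb{F}_q}$ denotes the field trace, $T$ an indeterminate. *)

(* Defs.v *)
From HB Require Import structures.
From mathcomp Require Import all_boot all_order all_algebra all_field.
Set Implicit Arguments. Unset Strict Implicit. Unset Printing Implicit Defensive.
Import GRing.Theory.
Local Open Scope ring_scope.

(* Trace of the finite field extension F_{q^r} / F_q, where F_q is the
   subfield {x | x^q = x} of L (with #|L| = q^r):
   Tr(a) = a + a^q + a^(q^2) + ... + a^(q^(r-1)). *)
Definition ffTrace (L : finFieldType) (q r : nat) (a : L) : L :=
  \sum_(i < r) a ^+ (q ^ i).

(* Main.v *)
Require Import Defs.
From HB Require Import structures.
From mathcomp Require Import all_boot all_order all_algebra all_field.
From mathcomp Require Import zify.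
Import GRing.Theory.
Local Open Scope ring_scope.

Lemma roots_card (L : finFieldType) (P : {poly L}) :
  P != 0 -> (#|[set x | root P x]| < size P)%N.
Proof.
move=> nz; rewrite cardE; apply: max_poly_roots => //; last exact: enum_uniq.
by apply/allP => x; rewrite mem_enum inE.
Qed.

Lemma size_monos (L : fieldType) (c : nat -> L) (e : nat -> nat) (n : nat) :
  c n != 0 -> (forall i, (i < n)%N -> (e i < e n)%N) ->
  size (\sum_(i < n.+1) c i *: 'X^(e i)) = (e n).+1 /\
  lead_coef (\sum_(i < n.+1) c i *: 'X^(e i)) = c n.
Proof.
move=> cn he; rewrite big_ord_recr /=.
have hs : (size (\sum_(i < n) c i *: 'X^(e i))%R < size (c n *: 'X^(e n)))%N.
  rewrite size_scale // size_polyXn ltnS.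
  apply: (leq_trans (size_sum _ _ _)); apply/bigmax_leqP => i _.
  by apply: leq_trans (size_scale_leq _ _) _; rewrite size_polyXn he.
rewrite addrC size_polyDl // lead_coefDl // size_scale // size_polyXn.
by rewrite lead_coefZ lead_coefXn mulr1.
Qed.

Lemma XnsubP (L : fieldType) (n : nat) (P : {poly L}) :
  (size P <= n)%N -> size ('X^n - P) = n.+1 /\ 'X^n - P \is monic.
Proof.
move=> hP; have h : (size (- P)%R < size ('X^n : {poly L}))%N.
  by rewrite size_polyN size_polyXn ltnS.
by rewrite size_polyDl // size_polyXn; split => //; rewrite monicE lead_coefDl // lead_coefXn.
Qed.

Lemma monic_sub_size (L : fieldType) (P Q : {poly L}) n :
  P \is monic -> Q \is monic -> size P = n.+1 -> size Q = n.+1 ->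
  (size (P - Q)%R <= n)%N.
Proof.
move=> /monicP mP /monicP mQ sP sQ; apply/leq_sizeP => j hj.
rewrite coefB; move: hj; rewrite leq_eqVlt => /orP [/eqP <- | hlt].
  by move: mP mQ; rewrite !lead_coefE sP sQ /= => -> ->; rewrite subrr.
by rewrite !nth_default ?subrr // ?sP ?sQ.
Qed.

Lemma fiber_count (L : finType) (f : L -> L) (B : {set L}) (m N : nat) :
  (forall a, #|[set x | f x == a]| <= m)%N -> (forall x, f x \in B) ->
  (#|B| <= N)%N -> #|L| = (N * m)%N ->
  forall a, a \in B -> #|[set x | f x == a]| = m.
Proof.
move=> hf hB hN hL a aB.
have e : #|L| = (\sum_(b in B) #|[set x | f x == b]|)%N.
  rewrite -sum1_card (partition_big f (mem B)) //=; apply: eq_bigr => b _.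
  by rewrite -sum1_card; apply: eq_bigl => x; rewrite inE.
rewrite (bigD1 a) //= in e.
have h2 : (\sum_(b in B | b != a) #|[set x | f x == b]| <= #|B|.-1 * m)%N.
  apply: (@leq_trans (\sum_(b in B | b != a) m)); first by apply: leq_sum => b _; exact: hf.
  rewrite sum_nat_cond_const leq_mul2r; apply/orP; right.
  rewrite (cardsD1 a B) aB add1n /=; apply: subset_leq_card; apply/subsetP => x.
  by rewrite !inE andbC.
have h3 := hf a.
have hB0 : (0 < #|B|)%N by apply/card_gt0P; exists a.
have h4 : (#|B| * m <= N * m)%N by rewrite leq_mul2r hN orbT.
apply/eqP; rewrite eqn_leq h3 /=.
have : (N * m <= #|[set x | f x == a]| + #|B|.-1 * m)%N by rewrite -hL e leq_add2l.
move: h4; case: #|B| hB0 => // c _; rewrite mulSn /=; lia.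
Qed.

Lemma frobD (L : fieldType) n (x y : L) : (GRing.pchar L).-nat n ->
  (x + y) ^+ n = x ^+ n + y ^+ n.
Proof. exact: exprDn_pchar. Qed.

Lemma frobB (L : fieldType) n (x y : L) : (GRing.pchar L).-nat n ->
  (x - y) ^+ n = x ^+ n - y ^+ n.
Proof. by move=> h; rewrite frobD // exprNn_pchar. Qed.

Lemma frobSum (L : fieldType) n (I : Type) (r : seq I) (P : pred I) (F : I -> L) :
  (GRing.pchar L).-nat n ->
  (\sum_(i <- r | P i) F i) ^+ n = \sum_(i <- r | P i) F i ^+ n.
Proof.
move=> h; have n0 : (0 < n)%N by case/andP: h.
apply: (big_morph (fun x : L => x ^+ n)) => [x y|]; first exact: frobD.
by rewrite expr0n eqn0Ngt n0.
Qed.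

Lemma pnat_pow (L : fieldType) p j : prime p -> p \in [pchar L] ->
  (GRing.pchar L).-nat (p ^ j)%N.
Proof. by move=> pp pc; rewrite pnatX pnatE // pc. Qed.

Lemma sizeXC (L : fieldType) (b c : L) : (size (b *: 'X + c%:P)%R <= 2)%N.
Proof.
apply: leq_trans (size_polyD _ _) _; rewrite geq_max.
apply/andP; split; first by apply: leq_trans (size_scale_leq _ _) _; rewrite size_polyX.
by apply: leq_trans (size_polyC_leq1 _) _.
Qed.
Arguments roots_card {L P}.
Arguments XnsubP {L n P}.
Arguments monic_sub_size {L P Q n}.
Arguments fiber_count {L f B m N}.
Arguments frobD {L n x y}.
Arguments frobB {L n x y}.
Arguments frobSum {L n I r P F}.
Theorem theorem2p2 (L : finFieldType) (p k q r : nat)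
  (Hp : prime p) (HpL : p \in [pchar L]) (Hk : (0 < k)%N) (Hq : q = (p ^ k)%N)
  (Hq3 : (3 <= q)%N) (Hr : (1 <= r)%N) (HL : #|L| = (q ^ r)%N) (alpha : L) :
  (ffTrace q r alpha != 0 ->
     let beta := ffTrace q r alpha ^+ p.-1 in
     exists gamma : 'I_(q %/ p) -> L,
       injective gamma /\ (forall i, gamma i != 0) /\
       'X^q - 'X - alpha%:P =
         \prod_(i < q %/ p) ('X^p - beta *: 'X - (gamma i)%:P))
  /\
  (ffTrace q r alpha = 0 ->
     exists s : seq L, 'X^q - 'X - alpha%:P = \prod_(x <- s) ('X - x%:P)).
Proof.
have p1 : (1 < p)%N := prime_gt1 Hp.
have p0 : (0 < p)%N := prime_gt0 Hp.
have hnat : forall j, (GRing.pchar L).-nat (p ^ j)%N by move=> j; exact: pnat_pow.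
have hnatq : forall i, (GRing.pchar L).-nat (q ^ i)%N by move=> i; rewrite Hq -expnM.
case: r Hr HL => // r' _ HL.
case: k Hk Hq => // k' _ Hq.
have hq' : (GRing.pchar L).-nat q by rewrite Hq.
have q1 : (1 < q)%N by lia.
have Fq : forall x : L, x ^+ (q ^ r'.+1) = x by move=> x; rewrite -HL expf_card.
have TrE : forall v : L, ffTrace q r'.+1 v = \sum_(i < r'.+1) v ^+ (q ^ i) by [].
have Tq : forall v : L, ffTrace q r'.+1 v ^+ q = ffTrace q r'.+1 v.
  move=> v; rewrite TrE (frobSum hq').
  under eq_bigr do rewrite -exprM -expnSr.
  by rewrite big_ord_recr big_ord_recl /= Fq expn0 expr1 addrC.
have Ttel : forall x : L, ffTrace q r'.+1 (x ^+ q - x) = 0.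
  move=> x; rewrite TrE.
  under eq_bigr do rewrite frobB // -exprM -expnS.
  rewrite -(big_mkord xpredT (fun i => x ^+ (q ^ i.+1) - x ^+ (q ^ i))).
  by rewrite telescope_sumr // Fq expn0 expr1 subrr.
have fixpow : forall (x : L) i, x ^+ q = x -> x ^+ (q ^ i) = x.
  move=> x i hx; elim: i => [|i IH]; first by rewrite expn0 expr1.
  by rewrite expnSr exprM IH.
pose TrP : {poly L} := \sum_(i < r'.+1) (fun _ => (1 : L)) i *: 'X^((fun i => q ^ i)%N i).
have [sTrP lTrP] : size TrP = (q ^ r').+1 /\ lead_coef TrP = 1.
  by apply: size_monos; [exact: oner_neq0 | move=> i hi; rewrite ltn_exp2l].
have TrPE : forall v : L, TrP.[v] = ffTrace q r'.+1 v.
  move=> w; rewrite horner_sum TrE; apply: eq_bigr => i _.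
  by rewrite hornerZ hornerXn mul1r.
have TrP0 : TrP != 0 by rewrite -size_poly_eq0 sTrP.
have HL' : #|L| = (q ^ r' * q)%N by rewrite HL expnSr.
split.
  move=> ht beta.
  set t := ffTrace q r'.+1 alpha in ht beta *.
  have tq : t ^+ q = t := Tq alpha.
  pose u := t^-1.
  have tu : t * u = 1 by rewrite mulfV.
  have uq : u ^+ q = u by rewrite /u exprVn tq.
  have upq : (u ^+ p) ^+ q = u ^+ p by rewrite -exprM mulnC exprM uq.
  have betaE : beta = t ^+ p.-1 by [].
  have hp' : (GRing.pchar L).-nat p by have := hnat 1%N; rewrite expn1.
  pose S := fun v : L => \sum_(j < k'.+1) (u ^+ p * v) ^+ (p ^ j).
  pose psi := fun v : L => t * S v.
  have tel : forall w : L, \sum_(j < k'.+1) (w ^+ p - w) ^+ (p ^ j) = w ^+ q - w.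
    move=> w; under eq_bigr do rewrite (frobB (hnat _)) -exprM -expnS.
    rewrite -(big_mkord xpredT (fun j => w ^+ (p ^ j.+1) - w ^+ (p ^ j))).
    by rewrite telescope_sumr // expn0 expr1 Hq.
  have I1 : forall x : L, psi (x ^+ p - beta * x) = x ^+ q - x.
    move=> x; rewrite /psi /S.
    have e0 : u ^+ p * t ^+ p.-1 = u.
      by rewrite -{1}(prednK p0) exprS -mulrA -exprMn [u * t]mulrC tu expr1n mulr1.
    have e : u ^+ p * (x ^+ p - beta * x) = (u * x) ^+ p - u * x.
      by rewrite mulrBr exprMn betaE mulrA e0.
    by rewrite e tel exprMn uq -mulrBr mulrA tu mul1r.
  have I2 : forall v : L, psi v ^+ p - beta * psi v = v ^+ q - v.
    move=> v.
    have eS : S v ^+ p - S v = (u ^+ p * v) ^+ q - u ^+ p * v.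
      rewrite -tel /S (frobSum hp') -sumrB; apply: eq_bigr => j _.
      rewrite (frobB (hnat _)); congr (_ - _); by rewrite -!exprM mulnC.
    rewrite /psi exprMn betaE mulrA -exprSr prednK // -mulrBr eS.
    by rewrite exprMn upq -mulrBr mulrA -exprMn tu expr1n mul1r.
  have I3 : forall v : L, ffTrace q r'.+1 (psi v) = psi (ffTrace q r'.+1 v).
    move=> v; rewrite TrE /psi /S.
    under eq_bigr do rewrite exprMn (fixpow _ _ tq) (frobSum (hnatq _)).
    rewrite -mulr_sumr; congr (_ * _).
    rewrite exchange_big /=; apply: eq_bigr => j _.
    rewrite mulr_sumr (frobSum (hnat _)); apply: eq_bigr => i _.
    by rewrite -exprM (mulnC (p ^ j)%N) exprM exprMn (fixpow _ _ upq).
  have ck : t * (u ^+ p) ^+ (p ^ k') = 1 by rewrite -exprM -expnS -Hq uq tu.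
  pose Psi : {poly L} := \sum_(j < k'.+1) (fun j => t * (u ^+ p) ^+ (p ^ j)) j *: 'X^((fun j => p ^ j)%N j).
  have [sPsi lPsi] : size Psi = (p ^ k').+1 /\ lead_coef Psi = t * (u ^+ p) ^+ (p ^ k').
    by apply: size_monos; [rewrite ck oner_neq0 | move=> i hi; rewrite ltn_exp2l].
  have PsiE : forall v : L, Psi.[v] = psi v.
    move=> v; rewrite horner_sum /psi /S mulr_sumr; apply: eq_bigr => j _.
    by rewrite hornerZ hornerXn exprMn mulrA.
  pose PB : {poly L} := TrP ^+ p - beta *: TrP.
  have mTp : TrP ^+ p \is monic by apply: monic_exp; apply/monicP.
  have sTp : size (TrP ^+ p) = (q ^ r' * p).+1.
    have := size_exp TrP p; rewrite sTrP /= => h.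
    by rewrite -h prednK // size_poly_gt0 monic_neq0.
  have sPB : size PB = (q ^ r' * p).+1.
    rewrite /PB size_polyDl sTp // size_polyN.
    apply: leq_ltn_trans (size_scale_leq _ _) _; rewrite sTrP ltnS.
    by apply: ltn_Pmulr => //; rewrite expn_gt0; lia.
  have PB0 : PB != 0 by rewrite -size_poly_eq0 sPB.
  have PBE : forall v : L, PB.[v] = ffTrace q r'.+1 v ^+ p - beta * ffTrace q r'.+1 v.
    by move=> v; rewrite /PB !hornerE TrPE.
  pose B := [set v | root PB v].
  have hfb : forall a : L, (#|[set x | psi x == a]| <= p ^ k')%N.
    move=> a.
    have sQa : size (Psi - a%:P) = (p ^ k').+1.
      rewrite size_polyDl sPsi // size_polyN.
      by apply: leq_ltn_trans (size_polyC_leq1 a) _; rewrite ltnS expn_gt0 p0.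
    have nz : Psi - a%:P != 0 by rewrite -size_poly_eq0 sQa.
    have := roots_card nz; rewrite sQa ltnS; apply: leq_trans; apply: subset_leq_card.
    by apply/subsetP => x; rewrite !inE rootE hornerD hornerN hornerC PsiE subr_eq0.
  have hfB : forall x : L, psi x \in B by move=> x; rewrite inE rootE PBE I3 I2 Tq subrr.
  have hBN : (#|B| <= q ^ r' * p)%N by have := roots_card PB0; rewrite sPB ltnS.
  have HL2 : #|L| = (q ^ r' * p * p ^ k')%N by rewrite HL' -mulnA -expnS -Hq.
  have aB : alpha \in B by rewrite inE rootE PBE betaE -exprSr prednK // subrr.
  have hR := fiber_count hfb hfB hBN HL2 alpha aB.
  set R := [set x | psi x == alpha] in hR.
  have hqp : (q %/ p)%N = (p ^ k')%N by rewrite Hq expnS mulKn.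
  have hsz : size (enum R) = (q %/ p)%N by rewrite -cardE hR hqp.
  pose Q := Psi - alpha%:P.
  have sQ : size Q = (p ^ k').+1.
    rewrite size_polyDl sPsi // size_polyN.
    by apply: leq_ltn_trans (size_polyC_leq1 alpha) _; rewrite ltnS expn_gt0 p0.
  have hQ : Q = \prod_(z <- enum R) ('X - z%:P).
    have := all_roots_prod_XsubC (p := Q) (rs := enum R).
    have -> : lead_coef Q = 1.
      rewrite lead_coefDl ?lPsi ?ck // sPsi size_polyN.
      by apply: leq_ltn_trans (size_polyC_leq1 alpha) _; rewrite ltnS expn_gt0 p0.
    rewrite scale1r; apply.
    - by rewrite sQ -cardE hR.
    - by apply/allP => x; rewrite mem_enum !inE rootE hornerD hornerN hornerC PsiE subr_eq0.
    - by rewrite uniq_rootsE enum_uniq.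
  exists (fun i : 'I_(q %/ p) => nth 0 (enum R) i).
  split.
    move=> i j /eqP; rewrite nth_uniq ?hsz ?enum_uniq // => /eqP; exact: val_inj.
  split.
    move=> i; apply/negP => /eqP h0.
    have : nth 0 (enum R) i \in enum R by rewrite mem_nth // hsz.
    rewrite h0 mem_enum inE => /eqP hpsi0.
    have : psi 0 = 0.
      rewrite /psi /S mulr0 big1 ?mulr0 // => j _.
      by rewrite expr0n eqn0Ngt expn_gt0 p0.
    rewrite hpsi0 => ha0; move: ht; rewrite /t ha0 TrE big1 ?eqxx // => i' _.
    by rewrite expr0n eqn0Ngt expn_gt0; case: (q) q1.
  have e1 : 'X^q - 'X - alpha%:P = 'X^q - ('X + alpha%:P) by rewrite opprD addrA.
  have hs : (size ('X + alpha%:P : {poly L})%R <= q)%N by rewrite size_XaddC; lia.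
  have [sL mL] := XnsubP hs.
  have fE : forall c : L, 'X^p - beta *: 'X - c%:P = 'X^p - (beta *: 'X + c%:P).
    by move=> c; rewrite opprD addrA.
  have hs2 : forall c : L, (size (beta *: 'X + c%:P)%R <= p)%N.
    by move=> c; apply: leq_trans (sizeXC _ _ _) _.
  have mR : \prod_(i < q %/ p) ('X^p - beta *: 'X - (nth 0 (enum R) i)%:P) \is monic.
    by apply: monic_prod => i _; rewrite fE; have [_ ->] := XnsubP (hs2 (nth 0 (enum R) i)).
  have sR : size (\prod_(i < q %/ p) ('X^p - beta *: 'X - (nth 0 (enum R) i)%:P)) = q.+1.
    rewrite size_prod; last first.
      by move=> i _; rewrite fE -size_poly_eq0; have [-> _] := XnsubP (hs2 (nth 0 (enum R) i)).
    under eq_bigr do rewrite fE (proj1 (XnsubP (hs2 _))).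
    rewrite big_const_ord iter_addn_0 card_ord hqp mulSn Hq expnS.
    lia.
  rewrite e1; apply/eqP; rewrite -subr_eq0; apply/eqP.
  apply: (roots_geq_poly_eq0 (rs := enum L)).
  - apply/allP => x _; rewrite rootE hornerD hornerN horner_prod.
    rewrite -e1 !hornerE subr_eq0; apply/eqP.
    have := congr1 (horner^~ (x ^+ p - beta * x)) hQ.
    rewrite horner_prod (big_nth 0) hsz big_mkord hornerD hornerN hornerC PsiE I1 => ->.
    by apply: eq_bigr => i _; rewrite hornerXsubC !hornerE.
  - exact: enum_uniq.
  - rewrite -cardE HL'; apply: leq_trans (monic_sub_size mL mR sL sR) _.
    by rewrite leq_pmull // expn_gt0 (ltnW q1).

move=> ht0.
pose f := fun x : L => x ^+ q - x.
pose B := [set v | root TrP v].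
have hfb : forall a : L, (#|[set x | f x == a]| <= q)%N.
  move=> a; have hs : (size ('X + a%:P : {poly L})%R <= q)%N by rewrite size_XaddC; lia.
  have [sz _] := XnsubP hs.
  have nz : 'X^q - ('X + a%:P) != 0 by rewrite -size_poly_eq0 sz.
  have := roots_card nz; rewrite sz ltnS; apply: leq_trans; apply: subset_leq_card.
  by apply/subsetP => x; rewrite !inE rootE !hornerE /f opprD addrA subr_eq0.
have hfB : forall x : L, f x \in B by move=> x; rewrite inE rootE TrPE Ttel.
have hBN : (#|B| <= q ^ r')%N by have := roots_card TrP0; rewrite sTrP ltnS.
have aB : alpha \in B by rewrite inE rootE TrPE ht0.
have hR := fiber_count hfb hfB hBN HL' alpha aB.
set R := [set x | f x == alpha] in hR.
have hs : (size ('X + alpha%:P : {poly L})%R <= q)%N by rewrite size_XaddC; lia.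
have [sz mo] := XnsubP hs.
exists (enum R).
have e1 : 'X^q - 'X - alpha%:P = 'X^q - ('X + alpha%:P) by rewrite opprD addrA.
rewrite e1.
have := all_roots_prod_XsubC (p := 'X^q - ('X + alpha%:P)) (rs := enum R).
rewrite (monicP mo) scale1r; apply.
- by rewrite sz -cardE hR.
- by apply/allP => x; rewrite mem_enum !inE rootE !hornerE /f opprD addrA subr_eq0.
- by rewrite uniq_rootsE enum_uniq.
Qed.
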